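(* Let $L$ be a fixed graph and let $n$ be sufficiently large. For every proper edge-colouring $\psi$ of $K_{L,n}$ there is a set $C_\psi\subseteq V(\tilde R)$ with $|C_\psi|=\Omega_L(n)$ which is compatible with $\tilde L$ with respect to $\psi$.
   Context: For vertex-disjoint graphs $L,R$, the join $K_{L,R}$ has vertex set $V(L)\cup V(R)$ and edge set $E(L)\cup E(R)\cup\{uv: u\in V(L), v\in V(R)\}$; $K_{L,n}$ denotes $K_{L,R}$ where $R$ is an edgeless graph on $n$ vertices; $\tilde L,\tilde R$ denote the copies of $L,R$ inside the join. Given a graph $G$, a proper edge-colouring $\psi$ of $G$ and a subgraph $K\subseteq G$, a vertex $x$ in the common neighbourhood of $V(K)$ is of interest to $K$ with respect to $\psi$ if $\psi(E(K))\cap\{\psi(xk):k\in V(K)\}=\emptyset$. A set $X$ of vertices is compatible with $K$ with respect to $\psi$ if every $x\in X$ is of interest to $K$ and the sets $\{\psi(xk):k\in V(K)\}$, $x\in X$, are pairwise disjoint. The implicit constant in $\Omega_L(n)$ depends only on $L$. *)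

(* Defs.v *)
From mathcomp Require Import all_boot.
Set Implicit Arguments. Unset Strict Implicit. Unset Printing Implicit Defensive.

Definition simple_graph (T : finType) (e : rel T) : Prop :=
  symmetric e /\ irreflexive e.

(* The join K_{L,n}: vertices VL + 'I_n; L-copy keeps its edges, R-copy is
   edgeless, every L-vertex is adjacent to every R-vertex. *)
Definition joinKn (VL : finType) (eL : rel VL) (n : nat) : rel (VL + 'I_n) :=
  fun x y => match x, y with
             | inl u, inl v => eL u v
             | inl _, inr _ => true
             | inr _, inl _ => true
             | inr _, inr _ => false
             end.

(* An edge-colouring of a graph (T,e): a colour for each (unordered) edge,
   given as a function on pairs that is symmetric on edges; proper means
   distinct edges sharing an endpoint receive distinct colours. *)
Definition proper_edge_colouring (T : finType) (e : rel T) (C : Type)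
    (psi : T -> T -> C) : Prop :=
  (forall x y, e x y -> psi x y = psi y x) /\
  (forall x y z, e x y -> e x z -> y <> z -> psi x y <> psi x z).

Definition in_Ltilde (VL : finType) (n : nat) (x : VL + 'I_n) : bool :=
  if x is inl _ then true else false.

Definition of_interest (T : finType) (e : rel T) (C : Type)
    (psi : T -> T -> C) (K : pred T) (x : T) : Prop :=
  (forall k, K k -> e x k) /\
  (forall u v k, K u -> K v -> e u v -> K k -> psi u v <> psi x k).

Definition compatible (T : finType) (e : rel T) (C : Type)
    (psi : T -> T -> C) (K : pred T) (X : {set T}) : Prop :=
  (forall x, x \in X -> of_interest e psi K x) /\
  (forall x y k k', x \in X -> y \in X -> x <> y -> K k -> K k' ->
      psi x k <> psi y k').

Arguments joinKn {VL} eL n.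
Arguments in_Ltilde {VL n} x.

(* Main.v *)
Require Import Defs.
From mathcomp Require Import all_boot.
From mathcomp Require Import zify.
Set Implicit Arguments. Unset Strict Implicit. Unset Printing Implicit Defensive.

Lemma bound_pick (A B : finType) (P : B -> A -> bool) :
  (forall b a a', P b a -> P b a' -> a = a') ->
  #|[set a | [exists b, P b a]]| <= #|B|.+1.
Proof.
move=> Hu.
rewrite -card_option.
apply: (@leq_card_in _ _ (fun a => [pick b | P b a])).
move=> a a'; rewrite !inE => /existsP [b Hb] /existsP [b' Hb'].
case: pickP => [c Hc|/(_ b)]; last by rewrite Hb.
case: pickP => [c' Hc'|/(_ b')]; last by rewrite Hb'.
by move=> [Ec]; subst c'; exact: Hu Hc Hc'.
Qed.

Lemma greedy (T : finType) (conf : rel T) (D : nat) :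
  (forall x y, conf x y -> conf y x) ->
  (forall x, #|[set y | conf x y]| <= D) ->
  forall S : {set T}, exists X : {set T}, X \subset S /\
    (forall x y, x \in X -> y \in X -> x != y -> ~~ conf x y) /\
    #|S| <= D.+1 * #|X|.
Proof.
move=> Hsym HD S.
have [m Hm] : exists m, #|S| <= m by exists #|S|.
elim: m S Hm => [|m IH] S Hm.
  exists set0; split; first exact: sub0set.
  split; first by move=> x y; rewrite inE.
  by rewrite cards0 muln0.
case: (set_0Vmem S) => [->|[x xS]].
  exists set0; split; first exact: sub0set.
  split; first by move=> x y; rewrite inE.
  by rewrite cards0 muln0.
set A := x |: [set y | conf x y].
set S' := S :\: A.
have HA : #|A| <= D.+1 by rewrite cardsU1 -add1n; apply: leq_add (leq_b1 _) (HD x).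
have HS : #|S :&: A| + #|S'| = #|S| by rewrite cardsID.
have HSA : #|S :&: A| <= #|A| by apply: subset_leq_card; apply: subsetIr.
have xSA : x \in S :&: A by rewrite !inE xS eqxx.
have HSA1 : 0 < #|S :&: A| by apply/card_gt0P; exists x.
have [X' [sub [pw card]]] := IH S' ltac:(lia).
have xX' : x \notin X'.
  apply/negP => /(subsetP sub); by rewrite !inE eqxx.
exists (x |: X'); split.
  apply/subsetP => y; rewrite in_setU1 => /orP [/eqP ->//|/(subsetP sub)].
  by rewrite inE => /andP [].
split.
  have Hnc : forall y, y \in X' -> ~~ conf x y.
    move=> y /(subsetP sub); rewrite !inE negb_or => /andP [/andP [_ H] _]; exact: H.
  move=> a b; rewrite !in_setU1 => /orP [/eqP ->|Ha] /orP [/eqP ->|Hb].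
  - by rewrite eqxx.
  - by move=> _; exact: Hnc.
  - move=> _; apply/negP => /Hsym; apply/negP; exact: Hnc.
  - exact: pw.
rewrite cardsU1 xX' /= mulnS; lia.
Qed.

Theorem mainTheorem5 (VL : finType) (eL : rel VL) :
  simple_graph eL ->
  exists (c : nat) (N : nat), 0 < c /\
    forall n : nat, N <= n ->
    forall (C : eqType) (psi : VL + 'I_n -> VL + 'I_n -> C),
      proper_edge_colouring (joinKn eL n) psi ->
      exists X : {set VL + 'I_n},
        (forall x, x \in X -> ~~ in_Ltilde x) /\
        n <= c * #|X| /\
        compatible (joinKn eL n) psi (@in_Ltilde VL n) X.
Proof.
move=> _.
set l := #|VL|.
exists (2 * (l * l).+2), (2 * (l * l * l).+1); split; first by [].
move=> n Hn C psi [Hsym Hprop].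
have Hu : forall k a b, psi (inr a) (inl k) = psi (inr b) (inl k) -> a = b.
  move=> k a b E; apply/eqP; apply/negPn/negP => Hab.
  have e1 : joinKn eL n (inl k) (inr a) by [].
  have e2 : joinKn eL n (inl k) (inr b) by [].
  apply: (Hprop _ _ _ e1 e2).
    by move=> [E']; rewrite E' eqxx in Hab.
  by rewrite (Hsym _ _ e1) (Hsym _ _ e2).
pose conf (a b : 'I_n) := [exists p : VL * VL, psi (inr a) (inl p.1) == psi (inr b) (inl p.2)].
have Hcs : forall a b, conf a b -> conf b a.
  move=> a b /existsP [[k k'] /= /eqP E]; apply/existsP; exists (k', k); by rewrite /= E.
have HcD : forall a, #|[set b | conf a b]| <= (l * l).+1.
  move=> a; rewrite /l -card_prod.
  apply: (@bound_pick _ _ (fun (p : VL * VL) b => psi (inr a) (inl p.1) == psi (inr b) (inl p.2))).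
  move=> [k k'] b b' /= /eqP E1 /eqP E2; apply: (Hu k'); by rewrite -E1 -E2.
pose bad := [set y : 'I_n | [exists p : VL * VL * VL, eL p.1.1 p.1.2 &&
               (psi (inl p.1.1) (inl p.1.2) == psi (inr y) (inl p.2))]].
have Hbad : #|bad| <= (l * l * l).+1.
  rewrite /l -!card_prod.
  apply: (@bound_pick _ _ (fun (p : VL * VL * VL) y => eL p.1.1 p.1.2 &&
               (psi (inl p.1.1) (inl p.1.2) == psi (inr y) (inl p.2)))).
  move=> [[u v] k] b b' /= /andP [_ /eqP E1] /andP [_ /eqP E2]; apply: (Hu k); by rewrite -E1 -E2.
have [Xo [sub [pw card]]] := greedy Hcs HcD (~: bad).
have HbC := cardsC bad; rewrite card_ord in HbC.
have inj : injective (@inr VL 'I_n) by move=> a b [].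
exists (inr @: Xo); split.
  by move=> x /imsetP [y _ ->].
split.
  rewrite card_imset // -mulnA; lia.
split.
  move=> x /imsetP [y yX ->]; split; first by case.
  move=> [u|u] [v|v] [k|k] //= _ _ Euv _ E.
  move: (subsetP sub _ yX); rewrite !inE => /negP; apply; apply/existsP.
  by exists (u, v, k); rewrite /= Euv E eqxx.
move=> x y [k|k] [k'|k'] /imsetP [a aX ->] /imsetP [b bX ->] Hxy //= _ _ E.
have Hab : a != b by apply/negP => /eqP Eab; apply: Hxy; rewrite Eab.
move: (pw a b aX bX Hab); rewrite /conf; move/negP; apply; apply/existsP.
by exists (k, k'); rewrite /= E.
Qed.
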